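(* Let $\Sigma_1$ and $\Sigma_2$ be systems with states $x^i\in\mathbb{R}^{n_i}$, inputs $u^i$ and outputs $y^i$ ($i=1,2$), where $\dim u^1=\dim y^2$ and $\dim u^2=\dim y^1$. Suppose $\Sigma_i$ is $p_i$-dissipative (respectively strictly $p_i$-dissipative), $i=1,2$, both with the same rate $\gamma\ge0$, with incremental supplies $$w^i(\Delta u^i,\Delta y^i)=\begin{bmatrix}\Delta y^i\\ \Delta u^i\end{bmatrix}^{\top}\begin{bmatrix}Q_i&L_i\\ L_i^{\top}&R_i\end{bmatrix}\begin{bmatrix}\Delta y^i\\ \Delta u^i\end{bmatrix},$$ with $Q_i,R_i$ symmetric. Consider the negative feedback interconnection $u^1=-y^2+v^1$, $u^2=y^1+v^2$, with input $v=[v^1;v^2]$, output $y=[y^1;y^2]$ and state $(x^1,x^2)$. Then the interconnection is $(p_1+p_2)$-dissipative (respectively strictly $(p_1+p_2)$-dissipative) with rate $\gamma$ and incremental supply $$\begin{bmatrix}\Delta y\\ \Delta v\end{bmatrix}^{\top}\begin{bmatrix}Q_1+R_2&-L_1+L_2^{\top}&L_1&R_2\\ -L_1^{\top}+L_2&Q_2+R_1&-R_1&L_2\\ L_1^{\top}&-R_1^{\top}&R_1&0\\ R_2&L_2^{\top}&0&R_2\end{bmatrix}\begin{bmatrix}\Delta y\\ \Delta v\end{bmatrix}.$$ In addition, if $$\begin{bmatrix}Q_1+R_2&-L_1+L_2^{\top}\\ -L_1^{\top}+L_2&Q_2+R_1\end{bmatrix}\le 0,$$ then the interconnection is $(p_1+p_2)$-dominant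 (respectively strictly $(p_1+p_2)$-dominant) with rate $\gamma$, i.e. the dominance inequality holds for every pair of its trajectories driven by the same input $v$.
   Context: A trajectory of a system with state $x\in\mathbb{R}^n$, input $u$ and output $y$ has absolutely continuous state and satisfies the system's equations for almost all $t\ge0$. For two trajectories write $\Delta x=x_1-x_2$, $\Delta\dot x=\dot x_1-\dot x_2$, $\Delta u=u_1-u_2$, $\Delta y=y_1-y_2$. A symmetric matrix $P$ has inertia $\{p,0,n-p\}$ if it has $p$ negative and $n-p$ positive eigenvalues. A system is $p$-dissipative with rate $\gamma\ge0$ and incremental supply $w$ (a quadratic form in $(\Delta y,\Delta u)$) if there exist a symmetric $P$ with inertia $\{p,0,n-p\}$ and $\varepsilon\ge0$ such that for every pair of trajectories, for almost all $t$, $$\begin{bmatrix}\Delta\dot x\\ \Delta x\end{bmatrix}^{\top}\begin{bmatrix}0&P\\P&2\gamma P+\varepsilon I\end{bmatrix}\begin{bmatrix}\Delta\dot x\\ \Delta x\end{bmatrix}\le w(\Delta y,\Delta u);$$ strictly $p$-dissipative if this holds with some $\varepsilon>0$. A system is $p$-dominant (strictly $p$-dominant) with rate $\gamma$ if the same inequality holds with right-hand side $0$ for some such $P$ and $\varepsilon\ge0$ ($\varepsilon>0$). *)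

(* Defs.v *)
From HB Require Import structures.
From mathcomp Require Import all_boot all_order all_algebra.
From mathcomp Require Import all_classical all_reals all_analysis.
Set Implicit Arguments. Unset Strict Implicit. Unset Printing Implicit Defensive.
Import Order.TTheory GRing.Theory Num.Theory.
Local Open Scope ring_scope.

Section Defs.
Variable R : realType.

Definition qf (k : nat) (M : 'M[R]_k) (z : 'cV[R]_k) : R := ((z^T *m M *m z) 0 0).

Definition nsd (k : nat) (M : 'M[R]_k) : Prop := forall z : 'cV[R]_k, qf M z <= 0.

(* A real symmetric matrix P has inertia {p,0,n-p}: its eigenvalues (roots of the
   characteristic polynomial, counted with multiplicity) consist of p negative and
   n-p positive ones. *)
Definition has_inertia (n : nat) (P : 'M[R]_n) (p : nat) : Prop :=
  P^T = P /\
  exists lam : 'I_n -> R,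
    char_poly P = \prod_(i < n) ('X - (lam i)%:P) /\
    #|[set i | lam i < 0]| = p /\ #|[set i | 0 < lam i]| = (n - p)%N.

(* A system with state in R^n, input in R^m, output in R^k, given by its set of
   trajectories t |-> (x t, xdot t, u t, y t), where xdot is the (a.e.) derivative
   of the state x. *)
Definition sys (n m k : nat) :=
  (R -> 'cV[R]_n) -> (R -> 'cV[R]_n) -> (R -> 'cV[R]_m) -> (R -> 'cV[R]_k) -> Prop.

Definition diss_lhs (n : nat) (P : 'M[R]_n) (gamma eps : R) (dxd dx : 'cV[R]_n) : R :=
  qf (block_mx 0 P P (2 * gamma *: P + eps *: 1%:M)) (col_mx dxd dx).

Definition eps_ok (strict : bool) (eps : R) : bool :=
  if strict then 0 < eps else 0 <= eps.

Definition p_dissipative (strict : bool) (n m k : nat) (S : sys n m k) (p : nat)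
    (gamma : R) (W : 'M[R]_(k + m)) : Prop :=
  exists P : 'M[R]_n, has_inertia P p /\
  exists eps : R, eps_ok strict eps /\
  forall x1 xd1 u1 y1 x2 xd2 u2 y2,
    S x1 xd1 u1 y1 -> S x2 xd2 u2 y2 ->
    {ae (@lebesgue_measure R), forall t : R, 0 <= t ->
       diss_lhs P gamma eps (xd1 t - xd2 t) (x1 t - x2 t)
       <= qf W (col_mx (y1 t - y2 t) (u1 t - u2 t))}.

Definition p_dominant (strict : bool) (n m k : nat) (S : sys n m k) (p : nat)
    (gamma : R) : Prop :=
  exists P : 'M[R]_n, has_inertia P p /\
  exists eps : R, eps_ok strict eps /\
  forall x1 xd1 u1 y1 x2 xd2 u2 y2,
    S x1 xd1 u1 y1 -> S x2 xd2 u2 y2 -> u1 = u2 ->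
    {ae (@lebesgue_measure R), forall t : R, 0 <= t ->
       diss_lhs P gamma eps (xd1 t - xd2 t) (x1 t - x2 t) <= 0}.

Definition feedback (n1 n2 m1 k1 : nat) (S1 : sys n1 m1 k1) (S2 : sys n2 k1 m1) :
    sys (n1 + n2) (m1 + k1) (k1 + m1) :=
  fun x xd v y =>
    exists x1 xd1 u1 y1 x2 xd2 u2 y2,
      S1 x1 xd1 u1 y1 /\ S2 x2 xd2 u2 y2 /\
      (forall t, x t = col_mx (x1 t) (x2 t)) /\
      (forall t, xd t = col_mx (xd1 t) (xd2 t)) /\
      (forall t, y t = col_mx (y1 t) (y2 t)) /\
      (forall t, u1 t = - y2 t + usubmx (v t)) /\
      (forall t, u2 t = y1 t + dsubmx (v t)).

End Defs.

(* Main.v *)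
Require Import Defs.
From HB Require Import structures.
From mathcomp Require Import all_boot all_order all_algebra.
From mathcomp Require Import all_classical all_reals all_analysis.
From mathcomp Require Import zify ring lra.
Import Order.TTheory GRing.Theory Num.Theory.
Local Open Scope ring_scope.

Section BF.
Variable R : realType.
Definition bf {a b} (x : 'cV[R]_a) (M : 'M[R]_(a, b)) (y : 'cV[R]_b) : R :=
  (x^T *m M *m y) 0 0.

Lemma bf_block a1 a2 b1 b2 (x1 : 'cV[R]_a1) (x2 : 'cV[R]_a2) (y1 : 'cV[R]_b1) (y2 : 'cV[R]_b2)
  A B C D :
  bf (col_mx x1 x2) (block_mx A B C D) (col_mx y1 y2) =
  bf x1 A y1 + bf x1 B y2 + bf x2 C y1 + bf x2 D y2.
Proof.
rewrite /bf tr_col_mx mul_row_block mul_row_col !mulmxDl !mxE; ring.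
Qed.

Lemma bfDl a b (x x' : 'cV[R]_a) (M : 'M[R]_(a, b)) y : bf (x + x') M y = bf x M y + bf x' M y.
Proof. by rewrite /bf linearD /= !mulmxDl mxE. Qed.
Lemma bfNl a b (x : 'cV[R]_a) (M : 'M[R]_(a, b)) y : bf (- x) M y = - bf x M y.
Proof. by rewrite /bf linearN /= !mulNmx mxE. Qed.
Lemma bfDr a b (x : 'cV[R]_a) (M : 'M[R]_(a, b)) y y' : bf x M (y + y') = bf x M y + bf x M y'.
Proof. by rewrite /bf mulmxDr mxE. Qed.
Lemma bfNr a b (x : 'cV[R]_a) (M : 'M[R]_(a, b)) y : bf x M (- y) = - bf x M y.
Proof. by rewrite /bf mulmxN mxE. Qed.
Lemma bfDm a b (x : 'cV[R]_a) (M M' : 'M[R]_(a, b)) y : bf x (M + M') y = bf x M y + bf x M' y.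
Proof. by rewrite /bf mulmxDr mulmxDl mxE. Qed.
Lemma bfNm a b (x : 'cV[R]_a) (M : 'M[R]_(a, b)) y : bf x (- M) y = - bf x M y.
Proof. by rewrite /bf mulmxN mulNmx mxE. Qed.
Lemma bfZm a b (x : 'cV[R]_a) c (M : 'M[R]_(a, b)) y : bf x (c *: M) y = c * bf x M y.
Proof. by rewrite /bf -scalemxAr -scalemxAl mxE. Qed.
Lemma bf0m a b (x : 'cV[R]_a) y : bf x (0 : 'M[R]_(a, b)) y = 0.
Proof. by rewrite /bf mulmx0 mul0mx mxE. Qed.
Lemma bf1_ge0 a (x : 'cV[R]_a) : 0 <= bf x 1%:M x.
Proof.
rewrite /bf mulmx1 mxE; apply: sumr_ge0 => i _; rewrite mxE -expr2; exact: sqr_ge0.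
Qed.

Lemma qfE k (M : 'M[R]_k) z : qf M z = bf z M z. Proof. by []. Qed.

Lemma diss_lhsE n (P : 'M[R]_n) g e dxd dx :
  diss_lhs P g e dxd dx = bf dxd P dx + bf dx P dxd + 2 * g * bf dx P dx + e * bf dx 1%:M dx.
Proof.
by rewrite /diss_lhs qfE bf_block bf0m bfDm !bfZm; ring.
Qed.

Lemma diss_lhs_block n1 n2 (P1 : 'M[R]_n1) (P2 : 'M[R]_n2) g e a1 a2 b1 b2 :
  diss_lhs (block_mx P1 0 0 P2) g e (col_mx a1 a2) (col_mx b1 b2) =
  diss_lhs P1 g e a1 b1 + diss_lhs P2 g e a2 b2.
Proof.
rewrite !diss_lhsE (scalar_mx_block n1 n2) !bf_block !bf0m; ring.
Qed.

Lemma diss_lhs_mono n (P : 'M[R]_n) g e e' a b : e <= e' ->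
  diss_lhs P g e a b <= diss_lhs P g e' a b.
Proof.
move=> ee; rewrite !diss_lhsE lerD2l; apply: ler_wpM2r => //; exact: bf1_ge0.
Qed.
Lemma bf0r a b (x : 'cV[R]_a) (M : 'M[R]_(a, b)) : bf x M 0 = 0.
Proof. by rewrite /bf mulmx0 mxE. Qed.
Lemma bf0l a b (y : 'cV[R]_b) (M : 'M[R]_(a, b)) : bf 0 M y = 0.
Proof. by rewrite /bf trmx0 !mul0mx mxE. Qed.
End BF.

Lemma supply_id (R : realType) (k1 m1 : nat)
    (Q1 : 'M[R]_k1) (L1 : 'M[R]_(k1, m1)) (R1 : 'M[R]_m1)
    (Q2 : 'M[R]_m1) (L2 : 'M[R]_(m1, k1)) (R2 : 'M[R]_k1) dy1 dy2 dv1 dv2 :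
  R1^T = R1 ->
  qf (block_mx
       (block_mx (Q1 + R2) (- L1 + L2^T) (- L1^T + L2) (Q2 + R1))
       (block_mx L1 R2 (- R1) L2)
       (block_mx L1^T (- R1^T) R2 L2^T)
       (block_mx R1 0 0 R2)) (col_mx (col_mx dy1 dy2) (col_mx dv1 dv2))
  = qf (block_mx Q1 L1 L1^T R1) (col_mx dy1 (- dy2 + dv1))
    + qf (block_mx Q2 L2 L2^T R2) (col_mx dy2 (dy1 + dv2)).
Proof.
move=> sR1; rewrite sR1 !qfE !bf_block !bf0m !bfDm !bfNm !bfDl !bfDr !bfNl !bfNr; ring.
Qed.
Lemma inertia_block (R : realType) n1 n2 (P1 : 'M[R]_n1) (P2 : 'M[R]_n2) p1 p2 :
  has_inertia P1 p1 -> has_inertia P2 p2 ->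
  has_inertia (block_mx P1 0 0 P2) (p1 + p2).
Proof.
move=> [s1 [l1 [c1 [n1' p1']]]] [s2 [l2 [c2 [n2' p2']]]].
split; first by rewrite tr_block_mx s1 s2 !trmx0.
pose lam (i : 'I_(n1 + n2)) := match fintype.split i with inl a => l1 a | inr b => l2 b end.
have lamL j : lam (lshift n2 j) = l1 j by rewrite /lam (unsplitK (inl _ j)).
have lamR j : lam (rshift n1 j) = l2 j by rewrite /lam (unsplitK (inr _ j)).
exists lam; split.
  rewrite /char_poly char_block_diag_mx det_ublock -/(char_poly P1) -/(char_poly P2).
  by rewrite c1 c2 big_split_ord /=; congr (_ * _); apply: eq_bigr => i _;
     rewrite ?lamL ?lamR.
have cnt (f1 : 'I_n1 -> bool) (f2 : 'I_n2 -> bool) (f : 'I_(n1+n2) -> bool) :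
  (forall j, f (lshift n2 j) = f1 j) -> (forall j, f (rshift n1 j) = f2 j) ->
  #|[set i | f i]| = (#|[set i | f1 i]| + #|[set i | f2 i]|)%N.
  move=> h1 h2; rewrite -!sum1_card big_split_ord /=.
  by congr (_ + _)%N; apply: eq_bigl => j; rewrite !inE ?h1 ?h2.
have le1 : (p1 <= n1)%N by rewrite -n1' -[X in (_ <= X)%N]card_ord max_card.
have le2 : (p2 <= n2)%N by rewrite -n2' -[X in (_ <= X)%N]card_ord max_card.
split.
  by rewrite (cnt (fun j => l1 j < 0) (fun j => l2 j < 0)) ?n1' ?n2' // => j; rewrite ?lamL ?lamR.
rewrite (cnt (fun j => 0 < l1 j) (fun j => 0 < l2 j)) ?n1' ?n2' ?p1' ?p2' //; last first.
- by move=> j; rewrite lamR.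
- by move=> j; rewrite lamL.
lia.
Qed.

Theorem theorem2 (R : realType) (n1 n2 m1 k1 : nat)
    (S1 : sys R n1 m1 k1) (S2 : sys R n2 k1 m1) (p1 p2 : nat) (gamma : R)
    (Q1 : 'M[R]_k1) (L1 : 'M[R]_(k1, m1)) (R1 : 'M[R]_m1)
    (Q2 : 'M[R]_m1) (L2 : 'M[R]_(m1, k1)) (R2 : 'M[R]_k1) (strict : bool) :
  0 <= gamma ->
  Q1^T = Q1 -> R1^T = R1 -> Q2^T = Q2 -> R2^T = R2 ->
  p_dissipative strict S1 p1 gamma (block_mx Q1 L1 L1^T R1) ->
  p_dissipative strict S2 p2 gamma (block_mx Q2 L2 L2^T R2) ->
  p_dissipative strict (feedback S1 S2) (p1 + p2) gamma
    (block_mx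
       (block_mx (Q1 + R2) (- L1 + L2^T) (- L1^T + L2) (Q2 + R1))
       (block_mx L1 R2 (- R1) L2)
       (block_mx L1^T (- R1^T) R2 L2^T)
       (block_mx R1 0 0 R2))
  /\
  (nsd (block_mx (Q1 + R2) (- L1 + L2^T) (- L1^T + L2) (Q2 + R1)) ->
   p_dominant strict (feedback S1 S2) (p1 + p2) gamma).
Proof.
move=> g0 sQ1 sR1 sQ2 sR2 [P1 [hP1 [e1 [he1 H1]]]] [P2 [hP2 [e2 [he2 H2]]]].
have hP := @inertia_block R _ _ _ _ _ _ hP1 hP2.
set e := Order.min e1 e2.
have he : eps_ok strict e.
  by move: he1 he2; rewrite /eps_ok /e; case: strict => ? ?; rewrite ?lt_min ?le_min; apply/andP.
have ee1 : e <= e1 by rewrite /e ge_min lexx.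
have ee2 : e <= e2 by rewrite /e ge_min lexx orbT.
set W := block_mx _ _ _ _.
have core : forall x xd v y x' xd' v' y',
    feedback S1 S2 x xd v y -> feedback S1 S2 x' xd' v' y' ->
    {ae (@lebesgue_measure R), forall t : R, 0 <= t ->
       diss_lhs (block_mx P1 0 0 P2) gamma e (xd t - xd' t) (x t - x' t)
       <= qf W (col_mx (y t - y' t) (v t - v' t))}.
  move=> x xd v y x' xd' v' y'
    [x1 [xd1 [u1 [y1 [x2 [xd2 [u2 [y2 [hS1 [hS2 [ex [exd [ey [eu1 eu2]]]]]]]]]]]]]]
    [x1' [xd1' [u1' [y1' [x2' [xd2' [u2' [y2' [hS1' [hS2' [ex' [exd' [ey' [eu1' eu2']]]]]]]]]]]]]].
  apply: (filterS2 (ae_filter_ringOfSetsType _) _ (H1 _ _ _ _ _ _ _ _ hS1 hS1') (H2 _ _ _ _ _ _ _ _ hS2 hS2')).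
  move=> t h1 h2 t0; move: (h1 t0) (h2 t0) => {h1 h2}.
  rewrite ex ex' exd exd' ey ey' eu1 eu1' eu2 eu2'.
  rewrite -(vsubmxK (v t)) -(vsubmxK (v' t)) !col_mxKu !col_mxKd.
  rewrite !opp_col_mx !add_col_mx diss_lhs_block supply_id //.
  have -> : - y2 t + usubmx (v t) - (- y2' t + usubmx (v' t)) =
            - (y2 t - y2' t) + (usubmx (v t) - usubmx (v' t)).
    by rewrite opprD opprK opprB addrACA (addrC (- y2 t)).
  have -> : y1 t + dsubmx (v t) - (y1' t + dsubmx (v' t)) =
            (y1 t - y1' t) + (dsubmx (v t) - dsubmx (v' t)).
    by rewrite opprD addrACA.
  move=> h1 h2; apply: lerD.
    by apply: le_trans h1; apply: diss_lhs_mono.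
  by apply: le_trans h2; apply: diss_lhs_mono.
split.
  by exists (block_mx P1 0 0 P2); split => //; exists e; split => //.
move=> hnsd; exists (block_mx P1 0 0 P2); split => //; exists e; split => //.
move=> x xd v y x' xd' v' y' hS hS' ev; subst v'.
apply: (@filterS _ _ (ae_filter_ringOfSetsType _) _ _ _ (core _ _ _ _ _ _ _ _ hS hS')) => t h t0.
apply: le_trans (h t0) _.
rewrite subrr qfE /W bf_block bf0r bf0l bf0r !addr0.
exact: hnsd.
Qed.
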